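(* Let $A\in\mathbb Z^{d\times n}$ with $\ker(A)\cap\mathbb N^n=\{0\}$. If a set of moves $B\subseteq\ker(A)$ reduces the distance of the Graver basis $G(A)$, then $B$ is a Markov basis of $A$.
   Context: For $z\in\mathbb Z^n$, $z^\pm\in\mathbb N^n$ are the unique vectors with disjoint supports and $z=z^+-z^-$; $\|\cdot\|$ is the $1$-norm. A Markov basis is a set $B\subseteq\ker(A)$ such that $\{x^{u^+}-x^{u^-}:u\in B\}$ generates the toric ideal $I_A=\langle x^{u^+}-x^{u^-}:u\in\ker(A)\rangle$. The Graver basis $G(A)$ is the set of nonzero $z\in\ker(A)$ admitting no decomposition $z=u+v$ with $u,v\in\ker(A)\setminus\{0\}$, $z^+=u^++v^+$, $z^-=u^-+v^-$. For nonzero $z\in\ker(A)$, $u\in\ker(A)$ reduces the distance of $z$ if there exist $(p,q)\in\{(z^+,z^-),(z^-,z^+)\}$ and $\varepsilon\in\{\pm1\}$ with $p+\varepsilon u\in\mathbb N^n$ and $\|p+\varepsilon u-q\|<\|z\|$; $B$ reduces the distance of $Z$ if every nonzero $z\in Z$ has its distance reduced by some element of $B$. *)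

(* Defs.v *)
From HB Require Import structures.
From mathcomp Require Import all_boot all_order all_algebra.
From mathcomp Require Import mpoly.
Set Implicit Arguments. Unset Strict Implicit. Unset Printing Implicit Defensive.
Import Order.TTheory GRing.Theory Num.Theory.
Local Open Scope ring_scope.

Definition inker (d n : nat) (A : 'M[int]_(d, n)) (z : 'cV[int]_n) : Prop :=
  A *m z = 0.

Definition nonneg (n : nat) (z : 'cV[int]_n) : Prop := forall i, 0 <= z i 0.

Definition zpos (n : nat) (z : 'cV[int]_n) : 'cV[int]_n :=
  \col_i Num.max (z i 0) 0.
Definition zneg (n : nat) (z : 'cV[int]_n) : 'cV[int]_n :=
  \col_i Num.max (- z i 0) 0.

Definition norm1 (n : nat) (z : 'cV[int]_n) : int := \sum_i `|z i 0|.

Definition graver (d n : nat) (A : 'M[int]_(d, n)) (z : 'cV[int]_n) : Prop :=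
  [/\ z != 0, inker A z &
   ~ exists u v : 'cV[int]_n,
       [/\ inker A u, inker A v, u != 0, v != 0 &
           [/\ z = u + v, zpos z = zpos u + zpos v & zneg z = zneg u + zneg v]]].

Definition reduces_dist (n : nat) (u z : 'cV[int]_n) : Prop :=
  exists (pq : 'cV[int]_n * 'cV[int]_n) (eps : int),
    [/\ pq = (zpos z, zneg z) \/ pq = (zneg z, zpos z),
        eps = 1 \/ eps = -1,
        nonneg (pq.1 + eps *: u) &
        norm1 (pq.1 + eps *: u - pq.2) < norm1 z].

Definition reduces_dist_set (n : nat) (B Z : 'cV[int]_n -> Prop) : Prop :=
  forall z, Z z -> z != 0 -> exists2 u, B u & reduces_dist u z.

(* monomial x^a for a \in N^n (entries of a are nonnegative integers) *)
Definition monom (k : fieldType) (n : nat) (a : 'cV[int]_n) : {mpoly k[n]} :=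
  'X_[[multinom (absz (a i ord0)) | i < n]].

Definition binom (k : fieldType) (n : nat) (u : 'cV[int]_n) : {mpoly k[n]} :=
  monom k (zpos u) - monom k (zneg u).

Definition ideal_gen (k : fieldType) (n : nat) (S : {mpoly k[n]} -> Prop)
  (p : {mpoly k[n]}) : Prop :=
  exists l : seq ({mpoly k[n]} * {mpoly k[n]}),
    (forall c, c \in l -> S c.2) /\ p = \sum_(c <- l) c.1 * c.2.

Definition toric_ideal (k : fieldType) (d n : nat) (A : 'M[int]_(d, n))
  (p : {mpoly k[n]}) : Prop :=
  ideal_gen (fun f => exists2 u, inker A u & f = binom k u) p.

Definition markov_basis (k : fieldType) (d n : nat) (A : 'M[int]_(d, n))
  (B : 'cV[int]_n -> Prop) : Prop :=
  (forall u, B u -> inker A u) /\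
  forall p : {mpoly k[n]}, toric_ideal A p <-> ideal_gen (fun f => exists2 u, B u & f = binom k u) p.
Arguments markov_basis k [d n] A B.

(* Main.v *)
Require Import Defs.
From HB Require Import structures.
From mathcomp Require Import all_boot all_order all_algebra.
From mathcomp Require Import mpoly.
From mathcomp Require Import zify ring.
From Stdlib Require Import Classical.
Import Order.TTheory GRing.Theory Num.Theory.
Local Open Scope ring_scope.

Section S.
Variables (k : fieldType) (n : nat).
Implicit Types (a b p q x : 'cV[int]_n).

Lemma monomD a b : nonneg a -> nonneg b ->
  monom k (a + b) = monom k a * monom k b.
Proof.
move=> Ha Hb; rewrite /monom -mpolyXD; congr 'X_[_]; apply/mnmP => i.
rewrite mnmDE !mnmE !mxE.
move: (Ha i) (Hb i); case: (a i ord0) => // m; case: (b i ord0) => // m' _ _.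
Qed.

Lemma zpos_nn x : nonneg (zpos x).
Proof. by move=> i; rewrite mxE; lia. Qed.
Lemma zneg_nn x : nonneg (zneg x).
Proof. by move=> i; rewrite mxE; lia. Qed.

Definition mmin p q : 'cV[int]_n := \col_i Num.min (p i 0) (q i 0).

Lemma binom_diff p q : nonneg p -> nonneg q ->
  monom k p - monom k q = monom k (mmin p q) * binom k (p - q).
Proof.
move=> Hp Hq; have Hm : nonneg (mmin p q).
  by move=> i; rewrite mxE; move: (Hp i) (Hq i); lia.
rewrite /binom mulrBr -!monomD //; try exact: zpos_nn; try exact: zneg_nn.
congr (monom k _ - monom k _); apply/matrixP => i j; rewrite !mxE ord1; move: (Hp i) (Hq i); move: (p i ord0) (q i ord0) => x y; lia.
Qed.

Lemma binomN x : binom k (- x) = - binom k x.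
Proof.
rewrite /binom opprB; congr (monom k _ - monom k _);
  apply/matrixP => i j; rewrite !mxE ?opprK; move: (x i 0) => y; lia.
Qed.

Lemma binom0 : binom k (0 : 'cV[int]_n) = 0.
Proof.
rewrite /binom; have -> : zpos (0 : 'cV[int]_n) = zneg 0.
  by apply/matrixP => i j; rewrite !mxE; lia.
by rewrite subrr.
Qed.

Lemma zposneg x : zpos x - zneg x = x.
Proof. apply/matrixP => i j; rewrite !mxE ord1; have E : forall y : int, Num.max y 0 - Num.max (-y) 0 = y by move=> y; lia. exact: E. Qed.
Lemma norm1_split x : norm1 x = \sum_i (zpos x i 0 + zneg x i 0).
Proof. by apply: eq_bigr => i _; rewrite !mxE; lia. Qed.

Lemma norm1_ge0 x : 0 <= norm1 x.
Proof. by apply: sumr_ge0 => i _. Qed.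

Lemma norm1_gt0 x : x != 0 -> 0 < norm1 x.
Proof.
move=> Hx.
have [i Hi] : exists i, x i 0 != 0.
  apply/not_all_not_ex => H; move/eqP: Hx; apply; apply/matrixP => i j.
  rewrite ord1 mxE; apply/eqP; apply/negPn/negP => /(H i) //.
rewrite /norm1 (bigD1 i) //=; apply: ltr_wpDr; first by apply: sumr_ge0.
by rewrite normr_gt0.
Qed.

Variable S : {mpoly k[n]} -> Prop.

Lemma ig0 : ideal_gen S 0.
Proof. by exists [::]; split => //; rewrite big_nil. Qed.

Lemma igD (p q : {mpoly k[n]}) : ideal_gen S p -> ideal_gen S q -> ideal_gen S (p + q).
Proof.
move=> [l1 [H1 ->]] [l2 [H2 ->]]; exists (l1 ++ l2); split; last by rewrite big_cat.
by move=> c; rewrite mem_cat => /orP [/H1|/H2].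
Qed.

Lemma igM (c p : {mpoly k[n]}) : ideal_gen S p -> ideal_gen S (c * p).
Proof.
move=> [l [H ->]]; exists [seq (c * y.1, y.2) | y <- l]; split.
  by move=> z /mapP [y Hy ->] /=; apply: H.
rewrite big_map mulr_sumr; apply: eq_bigr => y _ /=; by rewrite mulrA.
Qed.

Lemma ig1 f : S f -> ideal_gen S f.
Proof.
move=> Hf; exists [:: (1, f)]; split; last by rewrite big_seq1 mul1r.
by move=> c; rewrite inE => /eqP ->.
Qed.

Lemma igN (p : {mpoly k[n]}) : ideal_gen S p -> ideal_gen S (- p).
Proof. by move=> H; rewrite -mulN1r; apply: igM. Qed.

End S.

Section Main.
Variables (k : fieldType) (d n : nat) (A : 'M[int]_(d, n)) (B : 'cV[int]_n -> Prop).
Hypothesis HB : forall u, B u -> inker A u.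
Hypothesis Hred : reduces_dist_set B (graver A).

Let SB := fun f : {mpoly k[n]} => exists2 u, B u & f = binom k u.

Lemma inkerN v : inker A v -> inker A (- v).
Proof. by rewrite /inker mulmxN => ->; rewrite oppr0. Qed.

Lemma step v : (forall v', inker A v' -> norm1 v' < norm1 v -> ideal_gen SB (binom k v')) ->
  inker A v -> ideal_gen SB (binom k v).
Proof.
move=> IH Hv.
have [->|v0] := eqVneq v 0; first by rewrite binom0; apply: ig0.
have [Hg|Hng] := classic (graver A v).
  have [u Bu [[p q] [eps [Hpq Heps Hnn Hlt]]]] := Hred v Hg v0.
  rewrite /= in Hnn Hlt.
  set w := p + eps *: u in Hnn Hlt.
  have [Hp Hq] : nonneg p /\ nonneg q.
    by case: Hpq => [[-> ->]|[-> ->]]; split; (exact: zpos_nn || exact: zneg_nn).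
  have Hpq' : p - q = v \/ p - q = - v.
    case: Hpq => [[-> ->]|[-> ->]]; [left; exact: zposneg|right].
    by rewrite -opprB zposneg.
  have Hb : binom k v = monom k p - monom k q \/ binom k v = - (monom k p - monom k q).
    by case: Hpq => [[-> ->]|[-> ->]]; [left|right; rewrite opprB].
  suff H : ideal_gen SB (monom k p - monom k q).
    by case: Hb => ->; [|apply: igN].
  have -> : monom k p - monom k q = (monom k p - monom k w) + (monom k w - monom k q).
    by rewrite addrA subrK.
  apply: igD.
    rewrite binom_diff //; apply: igM.
    have -> : p - w = - (eps *: u) by rewrite /w opprD addrA subrr add0r.
    have Hu : ideal_gen SB (binom k u) by apply: ig1; exists u.
    by case: Heps => ->; rewrite ?scale1r ?scaleN1r ?opprK ?binomN //; exact: igN.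
  rewrite binom_diff //; apply: igM; apply: IH => //.
  have -> : w - q = (p - q) + eps *: u by rewrite /w addrAC.
  rewrite /inker mulmxDr -scalemxAr (HB _ Bu) scaler0 addr0.
  by case: Hpq' => ->; [|apply: inkerN].
have [a [b [Ha Hb' a0 b0 [Hab Hpos Hneg]]]] : exists a b : 'cV[int]_n,
       [/\ inker A a, inker A b, a != 0, b != 0 &
           [/\ v = a + b, zpos v = zpos a + zpos b & zneg v = zneg a + zneg b]].
  by apply: NNPP => H; apply: Hng; split.
have Hn : norm1 v = norm1 a + norm1 b.
  rewrite !norm1_split -big_split /=; apply: eq_bigr => i _.
  by rewrite Hpos Hneg !mxE; lia.
have Hna := @norm1_gt0 _ a a0; have Hnb := @norm1_gt0 _ b b0.
have -> : binom k v = monom k (zpos b) * binom k a + monom k (zneg a) * binom k b.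
  rewrite /binom Hpos Hneg !monomD; try exact: zpos_nn; try exact: zneg_nn.
  ring.
by apply: igD; apply: igM; apply: IH => //; rewrite Hn; lia.
Qed.

Lemma key v : inker A v -> ideal_gen SB (binom k v).
Proof.
suff H : forall N : nat, forall v, norm1 v <= N%:Z -> inker A v -> ideal_gen SB (binom k v).
  by move=> Hv; apply: (H (absz (norm1 v))) => //; have := @norm1_ge0 _ v; lia.
elim => [|N IHN] w Hw; apply: step => v' Hv' Hlt.
  by have := @norm1_ge0 _ v'; lia.
by apply: IHN => //; lia.
Qed.

End Main.

Theorem corollary7p6 (k : fieldType) (d n : nat) (A : 'M[int]_(d, n))
  (B : 'cV[int]_n -> Prop) :
  (forall z : 'cV[int]_n, inker A z -> nonneg z -> z = 0) ->
  (forall u, B u -> inker A u) ->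
  reduces_dist_set B (graver A) ->
  markov_basis k A B.
Proof.
move=> _ HB Hred; split => // p; split.
  move=> [l [Hl ->]]; elim: l Hl => [|c l IHl] Hl; first by rewrite big_nil; apply: ig0.
  rewrite big_cons; apply: igD; last by apply: IHl => z Hz; apply: Hl; rewrite inE Hz orbT.
  apply: igM; have [u Hu ->] := Hl c (mem_head _ _).
  exact: (@key k d n A B HB Hred u Hu).
move=> [l [Hl ->]]; exists l; split => // c Hc.
by have [u Bu ->] := Hl c Hc; exists u => //; apply: HB.
Qed.
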